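(* If $L$ is a flat layout, then $\mathrm{coal}^\flat(L)$ is the unique flat layout of minimal rank whose layout function equals $\Phi_L$.
   Context: A flat layout $L=(s_1,\dots,s_m):(d_1,\dots,d_m)$ consists of a tuple of positive integers and a tuple of nonnegative integers of the same length $m=\mathrm{rank}(L)$; its modes are $s_i:d_i$. Its layout function $\Phi_L:[0,s_1\cdots s_m)\to\mathbb{Z}$ is $\Phi_L(x)=\sum_i x_id_i$ with $x_i=\lfloor x/(s_1\cdots s_{i-1})\rfloor\bmod s_i$. $\mathrm{squeeze}(L)$ removes all modes with $s_i=1$; $\mathrm{coal}^\flat(L)$ is obtained from $\mathrm{squeeze}(L)$ by repeatedly replacing adjacent modes $s_i,s_{i+1}:d_i,d_{i+1}$ with $d_{i+1}=s_id_i$ by the single mode $s_is_{i+1}:d_i$ until no such pair remains. *)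

(* Defs.v *)
From mathcomp Require Import all_boot.
Set Implicit Arguments. Unset Strict Implicit. Unset Printing Implicit Defensive.

(* A layout is represented as the sequence of its modes s_i : d_i,
   i.e. a seq of pairs (shape, stride); this enforces equal lengths
   of the shape and stride tuples. *)
Definition layout := seq (nat * nat).

Definition shape (L : layout) : seq nat := map fst L.
Definition stride (L : layout) : seq nat := map snd L.

Definition flat (L : layout) : bool := all (fun m => 0 < m.1) L.

Definition rank (L : layout) : nat := size L.

Definition lsize (L : layout) : nat := \prod_(m <- L) m.1.

Definition layout_fun (L : layout) (x : nat) : nat :=
  \sum_(i < size L)
     ((x %/ \prod_(j < i) nth 0 (shape L) j) %% nth 0 (shape L) i)
       * nth 0 (stride L) i.

Definition same_layout_fun (L L' : layout) : Prop :=
  lsize L = lsize L' /\ forall x, x < lsize L -> layout_fun L x = layout_fun L' x.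

Definition squeeze (L : layout) : layout := filter (fun m => m.1 != 1) L.

(* The result has no adjacent mergeable pair. *)
Fixpoint coal_aux (L : layout) : layout :=
  match L with
  | [::] => [::]
  | m :: r =>
      match coal_aux r with
      | m2 :: r' => if m2.2 == m.1 * m.2 then (m.1 * m2.1, m.2) :: r'
                    else m :: m2 :: r'
      | [::] => [:: m]
      end
  end.

Definition coal_flat (L : layout) : layout := coal_aux (squeeze L).

(* Main.v *)
Require Import Defs.
From mathcomp Require Import all_boot zify.
Set Implicit Arguments. Unset Strict Implicit. Unset Printing Implicit Defensive.

Fixpoint lf (L : layout) (x : nat) : nat :=
  match L with
  | [::] => 0
  | m :: r => (x %% m.1) * m.2 + lf r (x %/ m.1)
  end.

Lemma layout_funE L x : layout_fun L x = lf L x.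
Proof.
elim: L x => [|m r IH] x; first by rewrite /layout_fun big_ord0.
rewrite /layout_fun /= big_ord_recl /= big_ord0 divn1.
congr (_ + _); rewrite -IH /layout_fun; apply: eq_bigr => i _.
by rewrite big_ord_recl /= divnMA.
Qed.

Lemma lsize_cons m r : lsize (m :: r) = m.1 * lsize r.
Proof. by rewrite /lsize big_cons. Qed.

Lemma lsize_nil : lsize [::] = 1.
Proof. by rewrite /lsize big_nil. Qed.

Lemma lf0 L : lf L 0 = 0.
Proof. by elim: L => //= m r; rewrite mod0n div0n => ->. Qed.

Lemma lsize_gt0 L : flat L -> 0 < lsize L.
Proof.
elim: L => [|m r IH]; first by rewrite lsize_nil.
by rewrite lsize_cons /= => /andP[h1 h2]; rewrite muln_gt0 h1 IH.
Qed.

Lemma modMsplit x a b : x %% (a * b) = x %% a + a * ((x %/ a) %% b).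
Proof.
rewrite modn_divl (mulnC b a).
set y := x %% (a * b).
have -> : x %% a = y %% a by rewrite /y modn_dvdm // dvdn_mulr.
by rewrite {1}(divn_eq y a) addnC mulnC.
Qed.

Lemma lf_squeeze L x : lf (squeeze L) x = lf L x.
Proof.
elim: L x => //= m r IH x; case: ifP => /= h; first by rewrite IH.
by move/negbFE/eqP: h => ->; rewrite modn1 divn1 IH.
Qed.

Lemma lsize_squeeze L : lsize (squeeze L) = lsize L.
Proof.
elim: L => //= m r IH; case: ifP => h; first by rewrite !lsize_cons IH.
by rewrite lsize_cons IH; move/negbFE/eqP: h => ->; rewrite mul1n.
Qed.

Lemma lf_coal L x : lf (coal_aux L) x = lf L x.
Proof.
elim: L x => //= m r IH x.
case E: (coal_aux r) => [|m2 r'].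
  by rewrite -IH E.
case: ifP => h.
  rewrite -IH E /= (eqP h) divnMA modMsplit.
  rewrite mulnDl addnA; congr (_ + _ + _).
  by rewrite [m.1 * _]mulnC -mulnA.
by rewrite /= -IH E.
Qed.

Lemma lsize_coal L : lsize (coal_aux L) = lsize L.
Proof.
elim: L => //= m r IH.
rewrite lsize_cons -IH.
case E: (coal_aux r) => [|m2 r'].
  by rewrite lsize_cons lsize_nil.
rewrite lsize_cons.
by case: ifP => h; rewrite !lsize_cons //= mulnA.
Qed.

Fixpoint canon (L : layout) : bool :=
  match L with
  | [::] => true
  | m :: r => [&& 1 < m.1,
                 (match r with m2 :: _ => m2.2 != m.1 * m.2 | [::] => true end)
               & canon r]
  end.

Lemma canon_coal L : all (fun m => 1 < m.1) L -> canon (coal_aux L).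
Proof.
elim: L => //= m r IH /andP[hm hr].
have := IH hr.
case E: (coal_aux r) => [|m2 r'] //=.
  by rewrite hm.
move=> /and3P[h2 hh hc].
case: ifP => h /=.
  rewrite hc andbT (leq_trans h2) ?leq_pmull ?(ltnW hm) //=.
  by case: r' hh hc {E} => //= m3 r'' hh _; rewrite -mulnA mulnCA -(eqP h).
by rewrite h /= h2 hh hc !andbT.
Qed.

Lemma canon_flat L : canon L -> flat L.
Proof.
elim: L => //= m r IH /and3P[h1 _ h3].
by rewrite IH // andbT (ltnW h1).
Qed.

Lemma canon_tail m r : canon (m :: r) -> canon r.
Proof. by case/and3P. Qed.

Lemma lf_one s d r : 1 < s -> lf ((s, d) :: r) 1 = d.
Proof.
by move=> hs /=; rewrite modn_small // divn_small // lf0 mul1n addn0.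
Qed.

Lemma lf_small s d r x : x < s -> lf ((s, d) :: r) x = x * d.
Proof. by move=> hs /=; rewrite modn_small // divn_small // lf0 addn0. Qed.

Lemma no_lt s d r s' d' r' :
  canon ((s, d) :: r) -> canon ((s', d') :: r') ->
  lsize ((s, d) :: r) = lsize ((s', d') :: r') ->
  (forall x, x < lsize ((s, d) :: r) -> lf ((s, d) :: r) x = lf ((s', d') :: r') x) ->
  d = d' -> s < s' -> False.
Proof.
move=> cA cB hs hf hd hlt.
have fB := canon_flat cB.
have fA := canon_flat cA.
have hsB : s' <= lsize ((s', d') :: r').
  rewrite lsize_cons /= leq_pmulr // lsize_gt0 //.
  exact: canon_flat (canon_tail cB).
move: cA hf hs; clear fA; case: r => [|[s2 d2] r2].
  by move=> _ _; rewrite lsize_cons lsize_nil muln1 => hs; move: hsB; rewrite -hs leqNgt hlt.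
move=> cA hf hs.
have := hf s.
rewrite hs (leq_trans hlt hsB) => /(_ isT).
rewrite (lf_small _ _ hlt) => e.
move: cA => /= /and3P[h1 hne /and3P[h3 _ _]].
move: e => /=; rewrite modnn divnn (ltnW h1) /= modn_small // divn_small // lf0.
rewrite mul0n add0n mul1n addn0 => e.
by move: hne; rewrite e hd eqxx.
Qed.

Lemma canon_unique A B :
  canon A -> canon B -> lsize A = lsize B ->
  (forall x, x < lsize A -> lf A x = lf B x) -> A = B.
Proof.
elim: A B => [|[s d] r IH] [|[s' d'] r'] //.
- move=> _ cB; rewrite lsize_nil lsize_cons /= => hs.
  move: cB => /= /and3P[h1 _ h3].
  have := lsize_gt0 (canon_flat h3).
  move: hs h1; clear; move=> hs h1 h2; nia.
- move=> cA _; rewrite lsize_nil lsize_cons /= => hs.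
  move: cA => /= /and3P[h1 _ h3].
  have := lsize_gt0 (canon_flat h3).
  move: hs h1; clear; move=> hs h1 h2; nia.
move=> cA cB hs hf.
have fA := canon_flat cA; have fB := canon_flat cB.
have gA := lsize_gt0 fA.
move: (cA) (cB) => /= /and3P[h1 _ _] /and3P[h1' _ _].
have hd : d = d'.
  have := hf 1; rewrite lf_one // lf_one //; apply.
  by apply: leq_trans h1 _; rewrite lsize_cons leq_pmulr // lsize_gt0 // (canon_flat (canon_tail cA)).
have hss : s = s'.
  case: (ltngtP s s') => // hlt.
  - by case: (no_lt cA cB hs hf hd hlt).
  - case: (no_lt cB cA (esym hs) _ (esym hd) hlt) => // x hx.
    by rewrite hf // hs.
subst s' d'.
congr (_ :: _).
have hs0 : 0 < s by apply: ltnW.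
apply: IH; first exact: canon_tail cA.
  exact: canon_tail cB.
  by move: hs; rewrite !lsize_cons /= => /eqP; rewrite eqn_pmul2l // => /eqP.
move=> y hy.
have := hf (y * s).
rewrite lsize_cons /= (mulnC s) ltn_pmul2r // hy => /(_ isT).
by rewrite modnMl mulnK.
Qed.

Lemma coal_size L : coal_aux L = L \/ size (coal_aux L) < size L.
Proof.
elim: L => /= [|m r IH]; first by left.
case: IH => [e|lt].
  rewrite e; case: r e => [|m2 r'] e /=; first by left.
  by case: ifP => h; [right|left].
case E: (coal_aux r) lt => [|m2 r'] lt; first by right.
by case: ifP => h; right => //=; rewrite ltnS ltnW.
Qed.

Lemma squeeze_size L : squeeze L = L \/ size (squeeze L) < size L.
Proof.
elim: L => /= [|m r IH]; first by left.
case: ifP => _ /=.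
  case: IH => [->|h]; [by left | by right].
by right; rewrite ltnS size_filter count_size.
Qed.

Lemma coal_flat_size L : coal_flat L = L \/ size (coal_flat L) < size L.
Proof.
rewrite /coal_flat; case: (squeeze_size L) => [e|h].
  by rewrite e; apply: coal_size.
right; case: (coal_size (squeeze L)) => [->//|h2]; exact: ltn_trans h2 h.
Qed.

Lemma canon_coal_flat L : flat L -> canon (coal_flat L).
Proof.
move=> fL; apply: canon_coal.
elim: L fL => //= m r IH /andP[h1 h2].
case: ifP => h /=; last exact: IH.
by rewrite IH // andbT ltn_neqAle eq_sym h h1.
Qed.

Lemma same_coal L : same_layout_fun (coal_flat L) L.
Proof.
split; first by rewrite /coal_flat lsize_coal lsize_squeeze.
by move=> x _; rewrite !layout_funE lf_coal lf_squeeze.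
Qed.

Lemma same_trans A B C : same_layout_fun A B -> same_layout_fun B C -> same_layout_fun A C.
Proof.
move=> [h1 h2] [h3 h4]; split; first by rewrite h1.
by move=> x hx; rewrite h2 // h4 // -h1.
Qed.

Lemma same_sym A B : same_layout_fun A B -> same_layout_fun B A.
Proof. by move=> [h1 h2]; split => // x hx; rewrite h2 // h1. Qed.

Lemma coal_eq L L' : flat L -> flat L' -> same_layout_fun L' L -> coal_flat L' = coal_flat L.
Proof.
move=> fL fL' hs.
have h : same_layout_fun (coal_flat L') (coal_flat L).
  apply: same_trans (same_coal L') _; apply: same_trans hs (same_sym (same_coal L)).
case: h => h1 h2.
apply: canon_unique; try exact: canon_coal_flat.
  by [].
by move=> x hx; rewrite -!layout_funE h2.
Qed.

Theorem mainTheorem11 (L : layout) :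
  flat L ->
  [/\ flat (coal_flat L),
      same_layout_fun (coal_flat L) L,
      (forall L' : layout, flat L' -> same_layout_fun L' L ->
         rank (coal_flat L) <= rank L') &
      (forall L' : layout, flat L' -> same_layout_fun L' L ->
         rank L' = rank (coal_flat L) -> L' = coal_flat L)].
Proof.
move=> fL; split.
- exact: canon_flat (canon_coal_flat fL).
- exact: same_coal.
- move=> L' fL' hs; rewrite /rank -(coal_eq fL fL' hs).
  by case: (coal_flat_size L') => [->|/ltnW].
- move=> L' fL' hs; rewrite /rank -(coal_eq fL fL' hs) => e.
  case: (coal_flat_size L') => [->//|h].
  by move: h; rewrite e ltnn.
Qed.
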